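(* Let $p$ be a prime, let $G$ be a finite $p$-group and let $A$ be a non-empty normal subset of $G$ consisting of elements of order $p$. Assume that for all $a\in A$, $a$ centralizes every elementary abelian $p$-subgroup of $G$ which it normalizes. Then $\langle A\rangle$ is an elementary abelian normal subgroup of $G$.
   Context: A normal subset of $G$ is a subset closed under conjugation by elements of $G$. *)

(* Defs.v *)
From mathcomp Require Import all_boot all_fingroup all_solvable.

(* Main.v *)
Require Import Defs.
From mathcomp Require Import all_boot all_fingroup all_solvable.
Set Implicit Arguments.
Unset Strict Implicit.
Unset Printing Implicit Defensive.
Local Open Scope group_scope.



Lemma abelem_gen (gT : finGroupType) (p : nat) (G : {group gT}) (A : {set gT}) :
  prime p -> p.-group G -> A \subset G -> (forall a, a \in A -> #[a] = p) ->
  abelian A -> p.-abelem <<A>>.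
Proof.
move=> pr pG sAG oA cA.
have pH : p.-group <<A>> by apply: pgroupS pG; rewrite gen_subG.
have -> : <<A>> = 'Ohm_1(<<A>>).
  apply/eqP; rewrite eqEsubset Ohm_sub andbT Ohm1Eprime genS //.
  apply/subsetP => x xA; rewrite inE mem_gen //= oA //.
by apply: Ohm1_abelem pH _; rewrite abelian_gen.
Qed.

Lemma key (gT : finGroupType) (p : nat) (n : nat) : forall (G : {group gT}) (A : {set gT}),
  #|G| <= n -> prime p -> p.-group G ->
  A \subset G ->
  (forall g, g \in G -> A :^ g = A) ->
  (forall a, a \in A -> #[a] = p) ->
  (forall a, a \in A -> forall E : {group gT},
      E \subset G -> p.-abelem E -> a \in 'N(E) -> a \in 'C(E)) ->
  abelian A.
Proof.
elim: n => [|n IH] G A.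
  by rewrite leqNgt cardG_gt0.
move=> cG pr pG sAG nA oA hA.
apply/centsP => a aA b bA; apply/commute_sym.
have aG : a \in G := subsetP sAG a aA.
have bG : b \in G := subsetP sAG b bA.
have sub : forall H : {group gT}, H \proper G -> (forall g, g \in H -> (A :&: H) :^ g = A :&: H) ->
    abelian (A :&: H).
  move=> H pH nAH.
  apply: (IH H (A :&: H)) => //.
  - by rewrite -ltnS; apply: leq_trans (proper_card pH) cG.
  - exact: pgroupS (proper_sub pH) pG.
  - exact: subsetIr.
  - by move=> c /setIP [cA _]; apply: oA.
  - move=> c /setIP [cA _] E sEH; apply: hA => //.
    exact: subset_trans sEH (proper_sub pH).
case: (eqVneq <<[set a; b]>>%G G) => [eG | nG].
- case: (eqVneq <[a]> G) => [eaG | naG].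
    have : b \in <[a]> by rewrite eaG.
    case/cycleP => k ->; apply: commute_sym; exact: commuteX.
  have paG : <[a]> \proper G by rewrite properEneq naG cycle_subG.
  have [M maxM saM] := @maxgroup_exists _ (fun H : {group gT} => H \proper G) _ paG.
  have nMG : M <| G := p_maximal_normal pG maxM.
  have pM : M \proper G := maxgroupp maxM.
  have aM : a \in M by rewrite -cycle_subG.
  have nAM : forall g, g \in G -> (A :&: M) :^ g = A :&: M.
    move=> g gG; have Mg : M :^ g = M.
      by apply/normP; apply: subsetP gG; case/andP: nMG.
    by rewrite conjIg nA // Mg.
  have hE := hA b bA [group of <<A :&: M>>].
  have : b \in 'C(<<A :&: M>>).
    apply: hE.
    - by rewrite gen_subG; apply: subset_trans (subsetIr _ _) (proper_sub pM).
    - apply: (abelem_gen pr pG).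
      + by apply: subset_trans (subsetIr _ _) (proper_sub pM).
      + by move=> c /setIP [cA _]; apply: oA.
      + apply: sub => // g gM; apply: nAM; exact: subsetP (proper_sub pM) g gM.
    - apply: (subsetP (norm_gen _)). by apply/normP; apply: nAM.
  move/centP => /(_ a); rewrite mem_gen ?inE ?aA ?aM // => /(_ isT) c.
  by [].
- have pH : <<[set a; b]>>%G \proper G.
    by rewrite properEneq nG gen_subG; apply/subsetP => x; rewrite !inE => /orP [] /eqP ->.
  have sHG := proper_sub pH.
  have cH : abelian (A :&: <<[set a; b]>>).
    apply: (sub _ pH) => g gH.
    by rewrite conjIg nA ?(subsetP sHG) // conjGid.
  have aH : a \in A :&: <<[set a; b]>> by rewrite inE aA mem_gen // !inE eqxx.
  have bH : b \in A :&: <<[set a; b]>> by rewrite inE bA mem_gen // !inE eqxx orbT.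
  apply/commute_sym; exact: (centsP cH) a aH b bH.
Qed.

Theorem lemma2p4 (gT : finGroupType) (p : nat) (G : {group gT}) (A : {set gT}) :
  prime p -> p.-group G ->
  A \subset G -> A != set0 ->
  (forall g, g \in G -> A :^ g = A) ->
  (forall a, a \in A -> #[a] = p) ->
  (forall a, a \in A -> forall E : {group gT},
      E \subset G -> p.-abelem E -> a \in 'N(E) -> a \in 'C(E)) ->
  p.-abelem <<A>> /\ <<A>> <| G.

Proof.
move=> pr pG sAG _ nA oA hA.
have cA : abelian A := key (leqnn _) pr pG sAG nA oA hA.
split; first exact: abelem_gen pr pG sAG oA cA.
rewrite /normal gen_subG sAG /=.
apply: subset_trans (norm_gen A).
by apply/normsP => g gG; apply: nA.
Qed.
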